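(* Let $\alpha\neq 0$ be a real number and let $S$ be an $\alpha$-singular maximal surface of $\mathbb L^3$ which is invariant under the one-parameter group of translations $\{p\mapsto p+t\vec v: t\in\mathbb R\}$ generated by a unit vector $\vec v$, so that $S$ is parametrized as $X(s,t)=\gamma(s)+t\vec v$ with generatrix $\gamma$ a planar spacelike curve with nonzero curvature, contained in a plane orthogonal to $\vec v$ (the unit normal of $S$ being taken as the normal $\mathbf n=\gamma'\times\vec v$ of $\gamma$). Then $\vec v$ is horizontal (i.e. parallel to the $xy$-plane), $\gamma$ is contained in a (vertical) plane orthogonal to $\vec v$, and $\gamma$, viewed as a planar curve of this plane identified with $\mathbb L^2$ (with the $z$-axis of $\mathbb L^3$ corresponding to the $y$-axis of $\mathbb L^2$), satisfies $$\kappa=-\alpha\frac{\langle \mathbf n,(0,1)\rangle}{y}.$$ Conversely, if $\gamma$ is a curve in $\mathbb L^2$ satisfying this equation and it is embedded in the $xz$-plane of $\mathbb L^3$ (identifying $\mathbb L^2$ with the $xz$-plane, its $y$-axis with the $z$-axis), then the surface $X(s,t)=\gamma(s)+t(0,1,0)$ is an $\alpha$-singular maximal surface.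
   Context: $\mathbb L^3$ is $\mathbb R^3$ with the Lorentzian metric $\langle\cdot,\cdot\rangle=dx^2+dy^2-dz^2$; $\mathbb L^2$ is $\mathbb R^2$ with metric $dx^2-dy^2$. A surface is spacelike if its induced metric is Riemannian; its unit normal $N$ is then timelike. The mean curvature $H$ is the trace of the second fundamental form (sum of principal curvatures) with respect to $N$. For $\alpha\neq0$, an $\alpha$-singular maximal surface is a spacelike surface $S$ in the halfspace $z>0$ satisfying $H(p)=\alpha\frac{\langle N(p),\vec a\rangle}{\langle p,\vec a\rangle}=-\alpha\frac{\langle N(p),\vec a\rangle}{z}$ for all $p\in S$, where $\vec a=(0,0,1)$ and $N$ is a unit normal field. For a spacelike curve $\gamma$ in the halfplane $y>0$ of $\mathbb L^2$ parametrized by arc length, the curvature $\kappa\neq0$ is defined by $\gamma''=\kappa\,\mathbf n$, where $\mathbf n$ is a unit (timelike) normal vector. *)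

(* Defs.v *)
From Stdlib Require Import Reals.
From Coquelicot Require Import Coquelicot.
Open Scope R_scope.

Record vec3 := V3 { vx : R; vy : R; vz : R }.

Definition vadd (u w : vec3) : vec3 := V3 (vx u + vx w) (vy u + vy w) (vz u + vz w).
Definition vscale (k : R) (u : vec3) : vec3 := V3 (k * vx u) (k * vy u) (k * vz u).

Definition lor (u w : vec3) : R := vx u * vx w + vy u * vy w - vz u * vz w.

(** Lorentzian cross product: the unique vector with lor (lcross u w) z = det(u,w,z). *)
Definition lcross (u w : vec3) : vec3 :=
  V3 (vy u * vz w - vz u * vy w)
     (vz u * vx w - vx u * vz w)
     (- (vx u * vy w - vy u * vx w)).

Definition e3 : vec3 := V3 0 0 1.

Definition dcurve (c : R -> vec3) (s : R) : vec3 :=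
  V3 (Derive (fun u => vx (c u)) s) (Derive (fun u => vy (c u)) s)
     (Derive (fun u => vz (c u)) s).

Definition C2_on (f : R -> R) (a b : R) : Prop :=
  forall s, a < s < b -> ex_derive f s /\ ex_derive (Derive f) s.

Definition C2_curve3 (c : R -> vec3) (a b : R) : Prop :=
  C2_on (fun u => vx (c u)) a b /\ C2_on (fun u => vy (c u)) a b /\
  C2_on (fun u => vz (c u)) a b.

Definition Xs (X : R -> R -> vec3) (s t : R) : vec3 := dcurve (fun u => X u t) s.
Definition Xt (X : R -> R -> vec3) (s t : R) : vec3 := dcurve (fun u => X s u) t.
Definition Xss X s t := Xs (Xs X) s t.
Definition Xst X s t := Xs (Xt X) s t.
Definition Xtt X s t := Xt (Xt X) s t.

Definition fE X s t := lor (Xs X s t) (Xs X s t).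
Definition fF X s t := lor (Xs X s t) (Xt X s t).
Definition fG X s t := lor (Xt X s t) (Xt X s t).

Definition spacelike_at (X : R -> R -> vec3) (s t : R) : Prop :=
  0 < fE X s t /\ 0 < fE X s t * fG X s t - fF X s t ^ 2.

Definition unit_normal_at (X : R -> R -> vec3) (N : R -> R -> vec3) (s t : R) : Prop :=
  lor (N s t) (N s t) = -1 /\ lor (N s t) (Xs X s t) = 0 /\ lor (N s t) (Xt X s t) = 0.

(** Mean curvature with respect to N: trace of the second fundamental form
    sigma, measured along N, i.e. H = <trace sigma, N> / <N,N>
    (so that the mean curvature vector trace sigma equals H N; this is the
    same convention as gamma'' = kappa n for curves). *)
Definition mean_curv (X : R -> R -> vec3) (N : R -> R -> vec3) (s t : R) : R :=
  let E := fE X s t in let F := fF X s t in let G := fG X s t in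
  let e := lor (Xss X s t) (N s t) in
  let f := lor (Xst X s t) (N s t) in
  let g := lor (Xtt X s t) (N s t) in
  ((e * G - 2 * f * F + g * E) / (E * G - F ^ 2)) / lor (N s t) (N s t).

Definition alpha_singular_maximal (alpha : R) (D : R -> R -> Prop)
  (X : R -> R -> vec3) (N : R -> R -> vec3) : Prop :=
  forall s t, D s t ->
    spacelike_at X s t /\ unit_normal_at X N s t /\ 0 < vz (X s t) /\
    mean_curv X N s t = - alpha * lor (N s t) e3 / vz (X s t).

Definition lor2 (p q : R * R) : R := fst p * fst q - snd p * snd q.

Definition dcurve2 (c : R -> R * R) (s : R) : R * R :=
  (Derive (fun u => fst (c u)) s, Derive (fun u => snd (c u)) s).

Definition C2_curve2 (c : R -> R * R) (a b : R) : Prop :=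
  C2_on (fun u => fst (c u)) a b /\ C2_on (fun u => snd (c u)) a b.

(* Main.v *)
Require Import Defs.
From Stdlib Require Import Reals Lra Psatz FunctionalExtensionality.
From Coquelicot Require Import Coquelicot.
Open Scope R_scope.

Lemma loc_int (a b s : R) : a < s < b -> locally s (fun u => a < u < b).
Proof.
  intros H. apply (open_and (fun u => a < u) (fun u => u < b) (open_gt a) (open_lt b)); tauto.
Qed.

Lemma Derive_pc (f : R -> R) (c x : R) : Derive (fun u => f u + c) x = Derive f x.
Proof.
  unfold Derive. f_equal. apply Lim_ext. intros h. unfold Rdiv. f_equal. ring.
Qed.

Lemma Derive_aff (c k x : R) : Derive (fun u => c + u * k) x = k.
Proof. apply is_derive_unique. auto_derive; auto. rewrite !Rmult_1_l; reflexivity. Qed.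

Lemma Dlin (f g h : R -> R) p q r x : ex_derive f x -> ex_derive g x -> ex_derive h x ->
  Derive (fun u => f u * p + g u * q - h u * r) x = Derive f x * p + Derive g x * q - Derive h x * r.
Proof. intros Hf Hg Hh. apply is_derive_unique. auto_derive; auto. rewrite !Rmult_1_l; reflexivity. Qed.

Definition Xof (g : R -> vec3) (v : vec3) := fun s t => vadd (g s) (vscale t v).

Lemma Xs_eq g v s t : Xs (Xof g v) s t = dcurve g s.
Proof. unfold Xs, Xof, dcurve; simpl. rewrite !Derive_pc. reflexivity. Qed.

Lemma Xt_eq g v s t : Xt (Xof g v) s t = v.
Proof. unfold Xt, Xof, dcurve; simpl. rewrite !Derive_aff. destruct v; reflexivity. Qed.

Lemma Xss_eq g v s t : Xss (Xof g v) s t = dcurve (dcurve g) s.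
Proof.
  unfold Xss. unfold Xs at 1.
  replace (fun u => Xs (Xof g v) u t) with (dcurve g) by (apply functional_extensionality; intro; symmetry; apply Xs_eq).
  reflexivity.
Qed.

Lemma Xst_eq g v s t : Xst (Xof g v) s t = V3 0 0 0.
Proof.
  unfold Xst. unfold Xs at 1.
  replace (fun u => Xt (Xof g v) u t) with (fun _ : R => v) by (apply functional_extensionality; intro; symmetry; apply Xt_eq).
  unfold dcurve; rewrite !Derive_const; reflexivity.
Qed.

Lemma Xtt_eq g v s t : Xtt (Xof g v) s t = V3 0 0 0.
Proof.
  unfold Xtt. unfold Xt at 1.
  replace (fun u => Xt (Xof g v) s u) with (fun _ : R => v) by (apply functional_extensionality; intro; symmetry; apply Xt_eq).
  unfold dcurve; rewrite !Derive_const; reflexivity.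
Qed.

Lemma mean_eq g v N s t : mean_curv (Xof g v) N s t =
  let E := lor (dcurve g s) (dcurve g s) in let F := lor (dcurve g s) v in let G := lor v v in
  ((lor (dcurve (dcurve g) s) (N s t) * G) / (E * G - F ^ 2)) / lor (N s t) (N s t).
Proof.
  unfold mean_curv, fE, fF, fG. rewrite !Xs_eq, !Xt_eq, Xss_eq, Xst_eq, Xtt_eq.
  simpl. replace (lor {| vx := 0; vy := 0; vz := 0 |} (N s t)) with 0 by (unfold lor; simpl; ring).
  unfold Rdiv; ring.
Qed.

Lemma alg_F (u v : vec3): vz v = 0 -> lor v v = 1 -> lor u u = 1 ->
  lor (lcross u v) (lcross u v) = -1 -> lor u v = 0.
Proof.
  intros h0 h1 h2 h3.
  assert (lor u v ^ 2 = lor u u * lor v v + lor (lcross u v) (lcross u v)) by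
    (destruct u, v; unfold lor, lcross; simpl; ring).
  rewrite h1, h2, h3 in H. nra.
Qed.

Lemma alg_decomp (g v : vec3) : vz v = 0 -> lor v v = 1 ->
  g = vadd (vscale (lor g v) v) (vadd (vscale (lor g (V3 (- vy v) (vx v) 0)) (V3 (- vy v) (vx v) 0)) (vscale (vz g) e3)).
Proof.
  destruct g as [g1 g2 g3], v as [v1 v2 v3]; unfold lor, vadd, vscale, e3; simpl.
  intros -> h. assert (h' : v1 * v1 + v2 * v2 = 1) by lra.
  f_equal.
  - transitivity (g1 * (v1 * v1 + v2 * v2)); [rewrite h'; ring | ring].
  - transitivity (g2 * (v1 * v1 + v2 * v2)); [rewrite h'; ring | ring].
  - ring.
Qed.

Lemma alg_unit2 (u v : vec3): vz v = 0 -> lor v v = 1 -> lor u u = 1 -> lor u v = 0 ->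
  let w := V3 (- vy v) (vx v) 0 in lor2 (lor u w, vz u) (lor u w, vz u) = 1.
Proof.
  destruct u as [p1 p2 p3], v as [v1 v2 v3]; unfold lor, lor2; simpl.
  intros -> h1 h2 h3.
  assert (Hid : (p1 * - v2 + p2 * v1 - p3 * 0) * (p1 * - v2 + p2 * v1 - p3 * 0) =
     (p1*p1+p2*p2)*(v1*v1+v2*v2) - (p1*v1+p2*v2-p3*0)*(p1*v1+p2*v2-p3*0)) by ring.
  rewrite Hid, h3. replace (v1*v1+v2*v2) with 1 by lra. lra.
Qed.

Lemma alg_nb (u v : vec3): vz v = 0 -> lor v v = 1 -> lor (lcross u v) (lcross u v) = -1 ->
  let w := V3 (- vy v) (vx v) 0 in
  lor2 (lor (lcross u v) w, vz (lcross u v)) (lor (lcross u v) w, vz (lcross u v)) = -1.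
Proof.
  destruct u as [p1 p2 p3], v as [v1 v2 v3]; unfold lor, lor2, lcross; simpl.
  intros -> h1 h2.
  assert (Hv : v1*v1+v2*v2 = 1) by lra.
  rewrite <- h2.
  transitivity ((p2 * 0 - p3 * v2) * (p2 * 0 - p3 * v2) + (p3 * v1 - p1 * 0) * (p3 * v1 - p1 * 0) -
     - (p1 * v2 - p2 * v1) * - (p1 * v2 - p2 * v1) + p3*p3*(v1*v1+v2*v2)*((v1*v1+v2*v2) - 1)).
  - ring.
  - rewrite Hv. ring.
Qed.

Lemma alg_orth (u v : vec3): vz v = 0 -> lor v v = 1 ->
  let w := V3 (- vy v) (vx v) 0 in
  lor2 (lor (lcross u v) w, vz (lcross u v)) (lor u w, vz u) = 0.
Proof.
  destruct u as [p1 p2 p3], v as [v1 v2 v3]; unfold lor, lor2, lcross; simpl.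
  intros -> h1.
  assert (Hv : v1*v1+v2*v2 = 1) by lra.
  transitivity (p3*(p2*v1-p1*v2)*((v1*v1+v2*v2) - 1)).
  - ring.
  - rewrite Hv. ring.
Qed.

Lemma D1 (gamma : R -> vec3) (w : vec3) s :
  ex_derive (fun u => vx (gamma u)) s -> ex_derive (fun u => vy (gamma u)) s ->
  ex_derive (fun u => vz (gamma u)) s ->
  Derive (fun u => lor (gamma u) w) s = lor (dcurve gamma s) w.
Proof.
  intros h1 h2 h3. unfold lor, dcurve; simpl.
  apply (Dlin (fun u => vx (gamma u)) (fun u => vy (gamma u)) (fun u => vz (gamma u))); auto.
Qed.

Lemma D2 (gamma : R -> vec3) (w : vec3) a b s : a < s < b -> C2_curve3 gamma a b ->
  Derive (fun u => Derive (fun u => lor (gamma u) w) u) s = lor (dcurve (dcurve gamma) s) w.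
Proof.
  intros hs [hx [hy hz]].
  rewrite (Derive_ext_loc _ (fun u => lor (dcurve gamma u) w)).
  - destruct (hx s hs), (hy s hs), (hz s hs).
    unfold lor at 2; unfold dcurve at 1; simpl.
    unfold lor, dcurve; simpl.
    apply (Dlin (fun u => Derive (fun u => vx (gamma u)) u) (fun u => Derive (fun u => vy (gamma u)) u) (fun u => Derive (fun u => vz (gamma u)) u)); auto.
  - apply (filter_imp (fun u => a < u < b)); [|apply loc_int; auto].
    intros u hu. destruct (hx u hu), (hy u hu), (hz u hu). apply D1; auto.
Qed.

Lemma lor_scale k u w : lor (vscale k u) w = k * lor u w.
Proof. destruct u, w; unfold lor, vscale; simpl; ring. Qed.

Lemma direct (alpha : R) :
  (forall (a b : R) (gamma : R -> vec3) (v : vec3) (kappa : R -> R),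
     a < b ->
     lor v v = 1 ->
     C2_curve3 gamma a b ->
     (forall s, a < s < b -> lor (dcurve gamma s) (dcurve gamma s) = 1) ->
     (exists c, forall s, a < s < b -> lor (gamma s) v = c) ->
     (forall s, a < s < b ->
        kappa s <> 0 /\
        dcurve (dcurve gamma) s = vscale (kappa s) (lcross (dcurve gamma s) v)) ->
     alpha_singular_maximal alpha (fun s _ => a < s < b)
       (fun s t => vadd (gamma s) (vscale t v))
       (fun s _ => lcross (dcurve gamma s) v) ->
     vz v = 0 /\
     (let w := V3 (- vy v) (vx v) 0 in
      let beta := fun s => (lor (gamma s) w, vz (gamma s)) in
      let nb := fun s => (lor (lcross (dcurve gamma s) v) w,
                          vz (lcross (dcurve gamma s) v)) in
      forall s, a < s < b ->
        gamma s = vadd (vscale (lor (gamma s) v) v)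
                   (vadd (vscale (fst (beta s)) w) (vscale (snd (beta s)) e3)) /\
        0 < snd (beta s) /\
        lor2 (dcurve2 beta s) (dcurve2 beta s) = 1 /\
        lor2 (nb s) (nb s) = -1 /\ lor2 (nb s) (dcurve2 beta s) = 0 /\
        dcurve2 (dcurve2 beta) s = (kappa s * fst (nb s), kappa s * snd (nb s)) /\
        kappa s = - alpha * lor2 (nb s) (0, 1) / snd (beta s))).
Proof.
  intros a b gamma v kappa hab hv hC2 hunit _ hk hsm.
  change (alpha_singular_maximal alpha (fun s _ => a < s < b) (Xof gamma v)
    (fun s _ => lcross (dcurve gamma s) v)) in hsm.
  assert (hvz : vz v = 0).
  { destruct (Req_dec (vz v) 0) as [h|h]; [exact h|exfalso].
    set (m := (a+b)/2). assert (hm : a < m < b) by (unfold m; lra).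
    destruct (hsm m (-(vz (gamma m) + 1)/vz v) hm) as [_ [_ [hp _]]].
    unfold Xof in hp; simpl in hp.
    replace (vz (gamma m) + - (vz (gamma m) + 1) / vz v * vz v) with (-1) in hp by (field; exact h).
    lra. }
  split; [exact hvz|]. cbv zeta. intros s hs.
  destruct (hsm s 0 hs) as [[hE hEG] [[hNN [hNs hNt]] [hpos hH]]].
  cbv beta in *.
  pose proof (hunit s hs) as hu.
  destruct (hk s hs) as [hk0 hdd].
  assert (hF : lor (dcurve gamma s) v = 0) by (apply alg_F; auto).
  pose proof hC2 as [hx [hy hz]].
  destruct (hx s hs), (hy s hs), (hz s hs).
  assert (hb1 : dcurve2 (fun s => (lor (gamma s) (V3 (- vy v) (vx v) 0), vz (gamma s))) s =
     (lor (dcurve gamma s) (V3 (- vy v) (vx v) 0), vz (dcurve gamma s))).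
  { unfold dcurve2; simpl. rewrite D1; auto. }
  assert (hb2 : dcurve2 (dcurve2 (fun s => (lor (gamma s) (V3 (- vy v) (vx v) 0), vz (gamma s)))) s =
     (lor (dcurve (dcurve gamma) s) (V3 (- vy v) (vx v) 0), vz (dcurve (dcurve gamma) s))).
  { unfold dcurve2; simpl. rewrite (D2 gamma _ a b); auto. }
  rewrite hb1, hb2. simpl fst. simpl snd.
  split; [apply alg_decomp; auto|].
  split; [unfold Xof in hpos; simpl in hpos; lra|].
  split; [apply alg_unit2; auto|].
  split; [apply alg_nb; auto|].
  split; [apply alg_orth; auto|].
  split.
  { rewrite hdd, lor_scale. reflexivity. }
  rewrite mean_eq in hH. cbv beta zeta in hH.
  rewrite hF, hu, hv, hdd in hH.
  rewrite lor_scale in hH.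
  rewrite hNN in hH.
  unfold Xof in hH; simpl in hH. rewrite hvz in hH.
  assert (hK : kappa s = - alpha * lor (lcross (dcurve gamma s) v) e3 / (vz (gamma s) + 0 * 0))
    by (rewrite <- hH; unfold Rdiv; rewrite Rmult_0_l, Rminus_0_r, !Rmult_1_r, Rinv_1; field).
  rewrite hK. unfold lor, lor2, e3; simpl. field. unfold Xof in hpos; simpl in hpos; rewrite hvz in hpos; lra.
Qed.

Lemma converse (alpha : R) :
  (forall (a b : R) (beta : R -> R * R) (n : R -> R * R) (kappa : R -> R),
     a < b ->
     C2_curve2 beta a b ->
     (forall s, a < s < b ->
        0 < snd (beta s) /\
        lor2 (dcurve2 beta s) (dcurve2 beta s) = 1 /\
        lor2 (n s) (n s) = -1 /\ lor2 (n s) (dcurve2 beta s) = 0 /\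
        kappa s <> 0 /\
        dcurve2 (dcurve2 beta) s = (kappa s * fst (n s), kappa s * snd (n s)) /\
        kappa s = - alpha * lor2 (n s) (0, 1) / snd (beta s)) ->
     let gamma := fun s => V3 (fst (beta s)) 0 (snd (beta s)) in
     let v := V3 0 1 0 in
     alpha_singular_maximal alpha (fun s _ => a < s < b)
       (fun s t => vadd (gamma s) (vscale t v))
       (fun s _ => lcross (dcurve gamma s) v)).
Proof.
  intros a b beta n kappa hab hC2 hyp gamma v.
  change (alpha_singular_maximal alpha (fun s _ => a < s < b) (Xof gamma v)
    (fun s _ => lcross (dcurve gamma s) v)).
  intros s t hs.
  destruct (hyp s hs) as [hb2 [hunit [hnn [hno [hk0 [hdd hk]]]]]].
  assert (hg1 : dcurve gamma s = V3 (fst (dcurve2 beta s)) 0 (snd (dcurve2 beta s))).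
  { unfold dcurve, dcurve2, gamma; simpl. rewrite Derive_const. reflexivity. }
  assert (hg2 : dcurve (dcurve gamma) s =
     V3 (fst (dcurve2 (dcurve2 beta) s)) 0 (snd (dcurve2 (dcurve2 beta) s))).
  { unfold dcurve at 1. unfold dcurve2 at 1. simpl.
    replace (fun u => Derive (fun _ : R => 0) u) with (fun _ : R => 0).
    - rewrite Derive_const. reflexivity.
    - apply functional_extensionality; intro u. 
      rewrite Derive_const. reflexivity. }
  rewrite hdd in hg2.
  unfold lor2 in hunit, hnn, hno, hk. simpl in hk.
  destruct (dcurve2 beta s) as [p q]. destruct (n s) as [n1 n2]. simpl in *.
  split; [|split; [|split]].
  - unfold spacelike_at, fE, fF, fG. rewrite Xs_eq, Xt_eq, hg1. unfold lor, v; simpl. nra.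
  - unfold unit_normal_at. rewrite Xs_eq, Xt_eq, hg1. unfold lor, lcross, v; simpl.
    split; [|split]; nra.
  - unfold Xof, gamma; simpl. lra.
  - rewrite mean_eq. cbv beta zeta. rewrite hg1, hg2.
    unfold Xof, gamma, lor, lcross, v, e3; simpl.
    assert (hpX : p * (q * n1 - p * n2) = - n2).
    { transitivity (q * (n1 * p - n2 * q) - n2 * (p * p - q * q)); [ring|].
      rewrite hno, hunit. ring. }
    assert (hn2 : n2 * n2 = p * p).
    { apply Rminus_diag_uniq.
      transitivity (- (p*p) * ((n1 * n1 - n2 * n2) + 1) + (n1 * p - n2 * q) * (n1 * p + n2 * q)
                    + n2 * n2 * (1 - (p * p - q * q))); [ring|].
      rewrite hnn, hno, hunit. ring. }
    assert (hp : p <> 0) by nra.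
    assert (hnX : n2 * (q * n1 - p * n2) = - p).
    { apply (Rmult_eq_reg_l p); [|exact hp]. 
      replace (p * (n2 * (q * n1 - p * n2))) with (n2 * (p * (q * n1 - p * n2))) by ring.
      rewrite hpX. nra. }
    rewrite hk. field_simplify; [| lra | nra ].
    replace (- alpha * n1 * n2 * q + alpha * n2 ^ 2 * p) with (alpha * p)
      by (transitivity (-alpha * (n2*(q*n1-p*n2))); [rewrite hnX; ring | ring]).
    replace (- snd (beta s) * q ^ 4 + 2 * snd (beta s) * q ^ 2 * p ^ 2 - snd (beta s) * p ^ 4)
      with (- snd (beta s))
      by (transitivity (- snd (beta s) * (p*p-q*q)^2); [rewrite hunit; ring | ring]).
    field. lra.
Qed.

Theorem proposition2p1 (alpha : R) (halpha : alpha <> 0) :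
  (* direct statement *)
  (forall (a b : R) (gamma : R -> vec3) (v : vec3) (kappa : R -> R),
     a < b ->
     lor v v = 1 ->
     C2_curve3 gamma a b ->
     (forall s, a < s < b -> lor (dcurve gamma s) (dcurve gamma s) = 1) ->
     (exists c, forall s, a < s < b -> lor (gamma s) v = c) ->
     (forall s, a < s < b ->
        kappa s <> 0 /\
        dcurve (dcurve gamma) s = vscale (kappa s) (lcross (dcurve gamma s) v)) ->
     alpha_singular_maximal alpha (fun s _ => a < s < b)
       (fun s t => vadd (gamma s) (vscale t v))
       (fun s _ => lcross (dcurve gamma s) v) ->
     vz v = 0 /\
     (let w := V3 (- vy v) (vx v) 0 in
      let beta := fun s => (lor (gamma s) w, vz (gamma s)) in
      let nb := fun s => (lor (lcross (dcurve gamma s) v) w,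
                          vz (lcross (dcurve gamma s) v)) in
      forall s, a < s < b ->
        gamma s = vadd (vscale (lor (gamma s) v) v)
                   (vadd (vscale (fst (beta s)) w) (vscale (snd (beta s)) e3)) /\
        0 < snd (beta s) /\
        lor2 (dcurve2 beta s) (dcurve2 beta s) = 1 /\
        lor2 (nb s) (nb s) = -1 /\ lor2 (nb s) (dcurve2 beta s) = 0 /\
        dcurve2 (dcurve2 beta) s = (kappa s * fst (nb s), kappa s * snd (nb s)) /\
        kappa s = - alpha * lor2 (nb s) (0, 1) / snd (beta s))) /\
  (* converse *)
  (forall (a b : R) (beta : R -> R * R) (n : R -> R * R) (kappa : R -> R),
     a < b ->
     C2_curve2 beta a b ->
     (forall s, a < s < b ->
        0 < snd (beta s) /\
        lor2 (dcurve2 beta s) (dcurve2 beta s) = 1 /\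
        lor2 (n s) (n s) = -1 /\ lor2 (n s) (dcurve2 beta s) = 0 /\
        kappa s <> 0 /\
        dcurve2 (dcurve2 beta) s = (kappa s * fst (n s), kappa s * snd (n s)) /\
        kappa s = - alpha * lor2 (n s) (0, 1) / snd (beta s)) ->
     let gamma := fun s => V3 (fst (beta s)) 0 (snd (beta s)) in
     let v := V3 0 1 0 in
     alpha_singular_maximal alpha (fun s _ => a < s < b)
       (fun s t => vadd (gamma s) (vscale t v))
       (fun s _ => lcross (dcurve gamma s) v)).
Proof.
  split; [apply direct | apply converse].
Qed.
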